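(* Let $\mathcal{P}(\mathbb{R}^d)$ denote the set of probability measures on $\mathbb{R}^d$ that are absolutely continuous with respect to Lebesgue measure and admit smooth densities. Let $p=\tilde p/\mathcal{Z}\in\mathcal{P}(\mathbb{R}^d)$ be a target density with $\tilde p:\mathbb{R}^d\to\mathbb{R}_{\ge0}$ continuous and $\mathcal{Z}=\int\tilde p(x)\,\mathrm{d}x$. Fix $\varepsilon_{\text{tr}}>0$, $\varepsilon_{\text{ent}}>0$ and $q_0\in\mathcal{P}(\mathbb{R}^d)$, and for $i\in\mathbb{N}$ consider the iterative scheme $$q_{i+1}=\operatorname*{arg\,min}_{q\in\mathcal{P}(\mathbb{R}^d)} D_{\mathrm{KL}}(q\,\|\,p)\quad\text{s.t.}\quad D_{\mathrm{KL}}(q\,\|\,q_i)\le\varepsilon_{\text{tr}},\quad H(q_i)-H(q)\le\varepsilon_{\text{ent}}$$ (together with the normalization constraint $\int q(x)\,\mathrm{d}x=1$), treated via a Lagrangian with multipliers $\lambda\ge0$ (trust-region constraint) and $\eta\ge0$ (entropy constraint). Then the intermediate optimal densities solving this problem satisfy $$q_{i+1}(x,\lambda,\eta)=\frac{q_i(x)^{\frac{\lambda}{1+\lambda+\eta}}\,\tilde p(x)^{\frac{1}{1+\lambda+\eta}}}{\mathcal{Z}_{i+1}(\lambda,\eta)},\qquad \mathcal{Z}_{i+1}(\lambda,\eta)=\int q_i(x)^{\frac{\lambda}{1+\lambda+\eta}}\,\tilde p(x)^{\frac{1}{1+\lambda+\eta}}\,\mathrm{d}x,$$ where $q_{i+1}$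 are the unique optima of the Lagrangian corresponding to this problem.
   Context: $D_{\mathrm{KL}}(q\|r)=\int q(x)\log\frac{q(x)}{r(x)}\,\mathrm{d}x$ is the Kullback–Leibler divergence and $H(q)=-\int q(x)\log q(x)\,\mathrm{d}x$ the Shannon entropy. The Lagrangian is $D_{\mathrm{KL}}(q\|p)+\lambda\big(D_{\mathrm{KL}}(q\|q_i)-\varepsilon_{\text{tr}}\big)+\eta\big(H(q_i)-H(q)-\varepsilon_{\text{ent}}\big)$. *)

(* Defs.v *)
(* R^d is modelled as d.-tuple R with the product
   (coordinate-generated) sigma-algebra of the Borel sets of R. *)
From HB Require Import structures.
From mathcomp Require Import all_boot all_order all_algebra.
From mathcomp Require Import all_classical all_reals all_analysis.
Set Implicit Arguments.
Unset Strict Implicit.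
Unset Printing Implicit Defensive.
Import Order.TTheory GRing.Theory Num.Theory.
Import numFieldNormedType.Exports.
Local Open Scope classical_set_scope.
Local Open Scope ring_scope.

Section Defs.
Variables (R : realType) (d : nat).
Local Notation Rd := (d.-tuple R).

Definition is_lebesgue_measure (mu : {measure set Rd -> \bar R}) : Prop :=
  forall a b : Rd, (forall i, tnth a i <= tnth b i) ->
    mu [set x : Rd | forall i, tnth a i <= tnth x i <= tnth b i] =
    (\prod_(i < d) (tnth b i - tnth a i))%:E.

Definition tuple_continuous (f : Rd -> R) : Prop :=
  forall x : Rd, forall e : R, 0 < e -> exists2 del : R, 0 < del &
    forall y : Rd, (forall i, `|tnth y i - tnth x i| < del) -> `|f y - f x| < e.

Variable mu : {measure set Rd -> \bar R}.

Definition is_density (q : Rd -> R) : Prop :=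
  [/\ measurable_fun setT q, (forall x, 0 <= q x) &
      (\int[mu]_x (q x)%:E = 1)%E].

Definition finite_entropy (q : Rd -> R) : Prop :=
  mu.-integrable setT (fun x => (q x * ln (q x))%:E).

(* Shannon entropy H(q) = - \int q log q  (convention 0 log 0 = 0, ln 0 = 0) *)
Definition entropy (q : Rd -> R) : \bar R :=
  (\int[mu]_x (- (q x * ln (q x)))%:E)%E.

Definition kl_integrand (a b : R) : \bar R :=
  if a == 0 then 0%E else if b == 0 then +oo%E else (a * ln (a / b))%:E.

Definition KL (q r : Rd -> R) : \bar R :=
  (\int[mu]_x kl_integrand (q x) (r x))%E.

Definition Zconst (ptil : Rd -> R) : \bar R := (\int[mu]_x (ptil x)%:E)%E.

Definition target (ptil : Rd -> R) (x : Rd) : R := ptil x / fine (Zconst ptil).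

Definition tilted (qi ptil : Rd -> R) (lam eta : R) (x : Rd) : R :=
  qi x `^ (lam / (1 + lam + eta)) * ptil x `^ (1 / (1 + lam + eta)).

Definition Znext (qi ptil : Rd -> R) (lam eta : R) : \bar R :=
  (\int[mu]_x (tilted qi ptil lam eta x)%:E)%E.

Definition qnext (qi ptil : Rd -> R) (lam eta : R) (x : Rd) : R :=
  tilted qi ptil lam eta x / fine (Znext qi ptil lam eta).

Definition lagrangian (ptil qi : Rd -> R) (eps_tr eps_ent lam eta : R)
    (q : Rd -> R) : \bar R :=
  (KL q (target ptil) + lam%:E * (KL q qi - eps_tr%:E)
   + eta%:E * (entropy qi - entropy q - eps_ent%:E))%E.

End Defs.

(* Main.v *)
Require Import Defs.
From HB Require Import structures.
From mathcomp Require Import all_boot all_order all_algebra.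
From mathcomp Require Import all_classical all_reals all_analysis.
From mathcomp Require Import measurable_realfun.
From mathcomp Require Import ring lra.
Import Order.TTheory GRing.Theory Num.Theory.
Import numFieldNormedType.Exports.
Local Open Scope classical_set_scope.
Local Open Scope ring_scope.

Definition gk {R : realType} (a b : R) : \bar R :=
  if a == 0 then b%:E else if b == 0 then +oo%E else (a * (ln a - ln b) - a + b)%:E.

Section gk.
Variable R : realType.
Implicit Types a b : R.

Lemma ln_le_sub1 (y : R) : 0 < y -> ln y <= y - 1.
Proof.
move=> y0; have := @le_ln1Dx R (y - 1); have -> : 1 + (y - 1) = y by ring. apply; lra.
Qed.

Lemma gk_real_ge0 a b : 0 < a -> 0 < b -> 0 <= a * (ln a - ln b) - a + b.
Proof.
move=> a0 b0.
have H := @ln_le_sub1 (b / a) (divr_gt0 b0 a0).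
rewrite ln_div ?posrE// in H.
have : a * (ln b - ln a) <= a * (b / a - 1) by rewrite ler_wpM2l// ltW.
have -> : a * (b / a - 1) = b - a by field; rewrite gt_eqF.
move=> H2; have -> : a * (ln a - ln b) = - (a * (ln b - ln a)) by ring.
lra.
Qed.

Lemma gk_real_eq0 a b : 0 < a -> 0 < b -> a * (ln a - ln b) - a + b = 0 -> a = b.
Proof.
move=> a0 b0 E.
set y := b / a.
have y0 : 0 < y by exact: divr_gt0.
have hy : ln y = y - 1.
  rewrite /y ln_div ?posrE//.
  have : a * (ln b - ln a) = a * (b / a - 1).
    have -> : a * (b / a - 1) = b - a by field; rewrite gt_eqF.
    lra.
  by move/(mulfI (lt0r_neq0 a0)).
set s := Num.sqrt y.
have s0 : 0 < s by rewrite sqrtr_gt0.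
have ss : s * s = y by rewrite -expr2 sqr_sqrtr// ltW.
have hs := @ln_le_sub1 s s0.
have : ln y = ln s + ln s by rewrite -ss lnM ?posrE.
rewrite hy -ss => H.
have s1 : s = 1 by nra.
have : y = 1 by rewrite -ss s1 mulr1.
move=> y1; have : b = y * a by rewrite /y; field; exact: lt0r_neq0. by rewrite y1 mul1r.
Qed.

Lemma gk_ge0 a b : 0 <= a -> 0 <= b -> (0 <= gk a b)%E.
Proof.
rewrite /gk => a0 b0; case: ifPn => [_|/eqP an0]; first by rewrite lee_fin.
case: ifPn => [//|/eqP bn0]; rewrite lee_fin; apply: gk_real_ge0; lra.
Qed.

Lemma gk_aa a : gk a a = 0%E.
Proof. by rewrite /gk; case: ifPn => [/eqP ->//|an0]; rewrite (negbTE an0) subrr mulr0 sub0r addNr. Qed.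

Lemma gk_eq0 a b : 0 <= a -> 0 <= b -> gk a b = 0%E -> a = b.
Proof.
rewrite /gk => a0 b0; case: ifPn => [/eqP -> [] //|/eqP an0].
case: ifPn => [//|/eqP bn0] [] E; apply: gk_real_eq0 E; lra.
Qed.

Lemma gk_kl a b : 0 <= a -> 0 <= b -> kl_integrand a b = (gk a b + (a - b)%:E)%E.
Proof.
rewrite /gk /kl_integrand => a0 b0; case: ifPn => [/eqP ->|an0].
  by rewrite -EFinD; congr (_%:E); ring.
case: ifPn => [//|bn0].
rewrite -EFinD; congr (_%:E).
rewrite ln_div ?posrE; [ring| |]; rewrite lt_def ?an0 ?bn0//.
Qed.

End gk.

Section gen.
Context (dd : measure_display) (T : measurableType dd) (R : realType).
Variable mu : {measure set T -> \bar R}.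
Local Open Scope ereal_scope.

Lemma ptw_split (F : \bar R) (h : R) : 0 <= F ->
  maxe (F + h%:E) 0 + maxe (- h%:E) 0 = F + maxe h%:E 0 + maxe (- (F + h%:E)) 0.
Proof.
case: F => [f||] //; rewrite ?lee_fin => f0.
- rewrite -!EFinD -!EFinN /maxe !lte_fin.
  case: ifPn; case: ifPn; case: ifPn; case: ifPn; rewrite -?EFinD; move=> *; congr (_%:E); lra.
- rewrite /maxe /= !lte_fin; case: ifPn => _; case: ifPn => _ //=; rewrite ?addye ?addey ?adde0 // ?ltNy0 //. 
Qed.

Lemma ereal_aux (a b c e g : \bar R) : b \is a fin_num -> e \is a fin_num ->
  g \is a fin_num -> 0 <= c -> a + b = c + e + g -> a - g = c + (e - b).
Proof.
case: b => // b; case: e => // e; case: g => // g _ _ _.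
case: c => [c||] //; case: a => [a||] //=.
by move=> _ /eqP; rewrite -!EFinD eqe => /eqP H; congr (_%:E); lra.
Qed.

Lemma integralD_ge0_int (F : T -> \bar R) (h : T -> R) :
  (forall x, 0 <= F x) -> measurable_fun [set: T] F ->
  mu.-integrable setT (EFin \o h) ->
  \int[mu]_x (F x + (h x)%:E) = \int[mu]_x F x + \int[mu]_x (h x)%:E.
Proof.
move=> F0 mF ih.
have mh : measurable_fun setT (EFin \o h) by exact: measurable_int ih.
set G := fun x => F x + (h x)%:E.
have mG : measurable_fun setT G by exact: emeasurable_funD.
have eq1 : \int[mu]_x (G^\+ x + (EFin \o h)^\- x) =
   \int[mu]_x ((F x + (EFin \o h)^\+ x) + G^\- x).
  by apply: eq_integral => x _; rewrite /G /= !funeposE !funenegE ptw_split.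
rewrite ge0_integralD// in eq1; first last.
all: try (by apply: measurable_funepos). 
all: try (by apply: measurable_funeneg).
all: try (by move=> x _; rewrite adde_ge0).
all: try (by apply: emeasurable_funD; [|apply: measurable_funepos]).
rewrite ge0_integralD// in eq1.
all: try (by apply: measurable_funepos). 
all: try (by apply: measurable_funeneg).
all: try (by move=> x _; rewrite adde_ge0).
all: try (by apply: emeasurable_funD; [|apply: measurable_funepos]).
rewrite ge0_integralD// in eq1.
all: try (by apply: measurable_funepos). 
all: try (by apply: measurable_funeneg).
all: try (by move=> x _; rewrite adde_ge0).
all: try (by apply: emeasurable_funD; [|apply: measurable_funepos]).
rewrite integralE (integralE _ _ (fun x => (h x)%:E)).
have fp : \int[mu]_x (EFin \o h)^\+ x \is a fin_num.
  by rewrite ge0_fin_numE ?integral_ge0// integral_funepos_lt_pinfty.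
have fn : \int[mu]_x (EFin \o h)^\- x \is a fin_num.
  by rewrite ge0_fin_numE ?integral_ge0// integral_funeneg_lt_pinfty.
have fg : \int[mu]_x G^\- x \is a fin_num.
  rewrite ge0_fin_numE ?integral_ge0//.
  apply: le_lt_trans (integral_funeneg_lt_pinfty measurableT ih).
  apply: ge0_le_integral => //. exact: measurable_funeneg. exact: measurable_funeneg.
  move=> x _; rewrite /G /= !funenegE.
  have := F0 x; case: (F x) => [f||] // f0.
    rewrite ge_max !le_max lexx !orbT andbT; apply/orP; left.
    rewrite -EFinD !lee_fin; rewrite lee_fin in f0; lra.
  by rewrite /= ge_max !le_max lexx !orbT andbT /= leNye.
have Fge : 0 <= \int[mu]_x F x by apply: integral_ge0.
exact: ereal_aux eq1.
Qed.
End gen.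

Section gen2.
Context (dd : measure_display) (T : measurableType dd) (R : realType).

Lemma mln (q : T -> R) : measurable_fun setT q -> measurable_fun setT (fun x => ln (q x)).
Proof. by move=> mq; apply: (measurableT_comp (@measurable_ln R)). Qed.

Lemma mpow (q : T -> R) e : measurable_fun setT q -> measurable_fun setT (fun x => q x `^ e).
Proof. by move=> mq; apply: (measurableT_comp (@measurable_powR R e)). Qed.

Lemma measurable_gk (q r : T -> R) : measurable_fun setT q -> measurable_fun setT r ->
  measurable_fun setT (fun x => gk (q x) (r x)).
Proof.
move=> mq mr; rewrite /gk.
apply: measurable_fun_ifT.
  exact: measurable_fun_eqr mq (measurable_cst _).
  exact/measurable_EFinP.
apply: measurable_fun_ifT.
  exact: measurable_fun_eqr mr (measurable_cst _).
  exact: measurable_cst.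
apply/measurable_EFinP.
apply: measurable_funD => //; apply: measurable_funB => //.
apply: measurable_funM => //; apply: measurable_funB; exact: mln.
Qed.
End gen2.

Section gen3.
Context (dd : measure_display) (T : measurableType dd) (R : realType).
Variable mu : {measure set T -> \bar R}.

Lemma dens_int (q : T -> R) : measurable_fun setT q -> (forall x, 0 <= q x) ->
  (\int[mu]_x (q x)%:E < +oo)%E -> mu.-integrable setT (EFin \o q).
Proof.
move=> mq q0 qoo; apply/integrableP; split; first exact/measurable_EFinP.
rewrite (eq_integral (fun x => (q x)%:E))// => x _.
by rewrite /comp gee0_abs// lee_fin.
Qed.

Lemma int_comb (f1 f2 : T -> R) (a b : R) :
  mu.-integrable setT (EFin \o f1) -> mu.-integrable setT (EFin \o f2) ->
  mu.-integrable setT (EFin \o (fun x => a * f1 x + b * f2 x)) /\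
  (\int[mu]_x (a * f1 x + b * f2 x)%:E =
    a%:E * \int[mu]_x (f1 x)%:E + b%:E * \int[mu]_x (f2 x)%:E)%E.
Proof.
move=> i1 i2.
have j1 := integrableZl measurableT a i1.
have j2 := integrableZl measurableT b i2.
have j := integrableD measurableT j1 j2.
split.
  by apply: eq_integrable j => // x _; rewrite /= EFinD !EFinM.
rewrite (eq_integral (fun x => a%:E * (EFin \o f1) x + b%:E * (EFin \o f2) x)%E); last first.
  by move=> x _; rewrite /= EFinD !EFinM.
rewrite integralD//.
by rewrite !integralZl.
Qed.

Lemma KL_gk_gen (q r : T -> R) :
  measurable_fun setT q -> (forall x, 0 <= q x) -> (\int[mu]_x (q x)%:E = 1)%E ->
  measurable_fun setT r -> (forall x, 0 <= r x) -> (\int[mu]_x (r x)%:E = 1)%E ->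
  (\int[mu]_x kl_integrand (q x) (r x) = \int[mu]_x gk (q x) (r x))%E.
Proof.
move=> mq q0 iq mr r0 ir.
rewrite (eq_integral (fun x => gk (q x) (r x) + (q x - r x)%:E)%E); last first.
  by move=> x _; rewrite gk_kl.
have iq' : mu.-integrable setT (EFin \o q) by apply: dens_int; rewrite ?iq ?ltry.
have ir' : mu.-integrable setT (EFin \o r) by apply: dens_int; rewrite ?ir ?ltry.
rewrite integralD_ge0_int//; last 3 first.
- by move=> x; apply: gk_ge0.
- exact: measurable_gk.
- by apply: eq_integrable (integrableB measurableT iq' ir') => // x _; rewrite /= EFinB.
rewrite [X in (_ + X)%E](_ : _ = 0%E) ?adde0 //.
rewrite (eq_integral (fun x => (1 * q x + (-1) * r x)%:E)); last first.
  by move=> x _; congr (_%:E); ring.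
have [_ ->] := @int_comb q r 1 (-1) iq' ir'.
by rewrite iq ir !mule1 -EFinD addrN.
Qed.
End gen3.

Section ptw.
Variable R : realType.

Lemma ptw_id (lam eta Zc Zn a u v : R) : 0 <= a -> 0 <= u -> 0 <= v ->
  0 <= lam -> 0 <= eta -> 0 < Zc -> 0 < Zn ->
 (gk a (v / Zc) + lam%:E * gk a u + (eta * (a * ln a))%:E =
  (1 + lam + eta)%:E * gk a ((u `^ (lam / (1 + lam + eta)) * v `^ (1 / (1 + lam + eta))) / Zn)
  + (eta * a - (1 + lam + eta) * ((u `^ (lam / (1 + lam + eta)) * v `^ (1 / (1 + lam + eta))) / Zn)
     + v / Zc + lam * u + (ln Zc - (1 + lam + eta) * ln Zn) * a)%:E)%E.
Proof.
move=> a0 u0 v0 l0 e0 Zc0 Zn0.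
set c := 1 + lam + eta.
have c0 : 0 < c by rewrite /c; lra.
set t := (u `^ (lam / c) * v `^ (1 / c)) / Zn.
have [->|an0] := eqVneq a 0.
  rewrite /gk !eqxx -!EFinM -!EFinD; congr (_%:E); ring.
have apos : 0 < a by rewrite lt_def an0.
have [v00|vn0] := eqVneq v 0.
  have t00 : t = 0 by rewrite /t v00 powR0 ?mulr0 ?mul0r// mul1r invr_eq0 gt_eqF.
  have H : (0 <= lam%:E * gk a u)%E by apply: mule_ge0; [rewrite lee_fin|exact: gk_ge0].
  move: H; set G := (lam%:E * gk a u)%E => H.
  rewrite t00 v00 mul0r /gk (negbTE an0) eqxx.
  rewrite addye; last by case: G H.
  by rewrite gt0_muley ?lte_fin// !addye.
have vpos : 0 < v by rewrite lt_def vn0.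
have lnvZ : ln (v / Zc) = ln v - ln Zc by rewrite ln_div ?posrE.
have vZn0 : v / Zc != 0 by rewrite mulf_eq0 negb_or vn0 invr_eq0 gt_eqF.
have [[u00 lpos]|ulam] : (u = 0 /\ 0 < lam) \/ (0 < u \/ lam = 0).
  case: (eqVneq u 0) => [->|un0]; last by right; left; rewrite lt_def un0.
  by case: (eqVneq lam 0) => [->|ln0]; [right; right|left; split; rewrite // lt_def ln0].
  have t00 : t = 0 by rewrite /t u00 powR0 ?mul0r// mulf_eq0 negb_or gt_eqF// invr_eq0 gt_eqF.
  rewrite t00 u00 /gk (negbTE an0) eqxx (negbTE vZn0) gt0_muley ?lte_fin//.
  rewrite addye//.
  by rewrite gt0_muley ?lte_fin.
have Upos : 0 < u `^ (lam / c).
  case: ulam => [upos|->]; first exact: powR_gt0.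
  by rewrite mul0r powRr0.
have tpos : 0 < t by rewrite /t divr_gt0// mulr_gt0// powR_gt0.
have lnt : ln t = (lam / c) * ln u + (1 / c) * ln v - ln Zn.
  rewrite /t ln_div ?posrE//; last exact: mulr_gt0 Upos (powR_gt0 _ vpos).
  rewrite lnM ?posrE// ?ln_powR//; exact: powR_gt0.
have lamterm : (lam%:E * gk a u = (lam * (a * (ln a - ln u) - a + u))%:E)%E.
  case: ulam => [upos|->]; last by rewrite !mul0r mul0e.
  by rewrite /gk (negbTE an0) gt_eqF.
rewrite lamterm /gk (negbTE an0) (negbTE vZn0) gt_eqF// lnvZ lnt.
rewrite -!EFinM -!EFinD; congr (_%:E).
rewrite /c; field; rewrite lt0r_neq0//; exact: lt0r_neq0.
Qed.
End ptw.

Lemma lag_aux (R : realType) (Gp Gi Gt : \bar R) (lam eta c E Hqi K eps1 eps2 : R) :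
 (0 <= Gp)%E -> (0 <= Gi)%E -> (0 <= Gt)%E -> 0 <= lam -> 0 <= eta -> 0 < c ->
 (Gp + lam%:E * Gi + (eta * E)%:E = c%:E * Gt + K%:E)%E ->
 (Gp + lam%:E * (Gi - eps1%:E) + eta%:E * (Hqi%:E - (- E)%:E - eps2%:E) =
  c%:E * Gt + (K - lam * eps1 + eta * (Hqi - eps2))%:E)%E.
Proof.
move=> Gp0 Gi0 Gt0 l0 e0 c0.
rewrite -!EFinB -EFinM.
have [->|lpos] := eqVneq lam 0.
  rewrite !mul0e !mul0r subr0 !adde0.
  case: Gp Gp0 => [gp||] // _; case: Gt Gt0 => [gt||] // _;
    rewrite ?gt0_muley ?lte_fin //= -?EFinM -?EFinD //.
  by move/eqP; rewrite eqe => /eqP H; congr (_%:E); lra.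
have lp : 0 < lam by rewrite lt_def lpos.
case: Gp Gp0 => [gp||] // _; case: Gi Gi0 => [gi||] // _; case: Gt Gt0 => [gt||] // _;
  rewrite ?gt0_muley ?lte_fin //= -?EFinM -?EFinD -?EFinB -?EFinM -?EFinD //.
by move/eqP; rewrite eqe => /eqP H; congr (_%:E); lra.
Qed.


Theorem proposition3 (R : realType) (d : nat)
    (mu : {measure set (d.-tuple R) -> \bar R})
    (ptil qi : d.-tuple R -> R) (eps_tr eps_ent lam eta : R) :
  is_lebesgue_measure mu ->
  tuple_continuous ptil -> measurable_fun setT ptil ->
  (forall x, 0 <= ptil x) ->
  (0 < Zconst mu ptil < +oo)%E ->
  0 < eps_tr -> 0 < eps_ent ->
  is_density mu qi -> finite_entropy mu qi ->
  0 <= lam -> 0 <= eta ->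
  (0 < Znext mu qi ptil lam eta < +oo)%E ->
  finite_entropy mu (qnext mu qi ptil lam eta) ->
  [/\ is_density mu (qnext mu qi ptil lam eta),
      (forall q, is_density mu q -> finite_entropy mu q ->
        (lagrangian mu ptil qi eps_tr eps_ent lam eta (qnext mu qi ptil lam eta)
         <= lagrangian mu ptil qi eps_tr eps_ent lam eta q)%E) &
      (forall q, is_density mu q -> finite_entropy mu q ->
        (lagrangian mu ptil qi eps_tr eps_ent lam eta q
         <= lagrangian mu ptil qi eps_tr eps_ent lam eta (qnext mu qi ptil lam eta))%E ->
        {ae mu, forall x, q x = qnext mu qi ptil lam eta x})].
Proof.
move=> _ _ mptil ptil0 /andP[Z0 Zoo] _ _ [mqi qi0 iqi] feqi lam0 eta0 /andP[Zn0 Znoo] fet.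
have [Zc ZcE] : exists Zc, Zconst mu ptil = Zc%:E.
  by move: Z0 Zoo; case: (Zconst mu ptil) => // r; exists r.
have [Zn ZnE] : exists Zn, Znext mu qi ptil lam eta = Zn%:E.
  by move: Zn0 Znoo; case: (Znext mu qi ptil lam eta) => // r; exists r.
have Zc0 : 0 < Zc by rewrite -lte_fin -ZcE.
have Zn0' : 0 < Zn by rewrite -lte_fin -ZnE.
have c0 : 0 < 1 + lam + eta by lra.
set c := 1 + lam + eta in c0.
pose p := target mu ptil.
pose t := qnext mu qi ptil lam eta.
have pE x : p x = ptil x / Zc by rewrite /p /target ZcE.
have tE x : t x = tilted qi ptil lam eta x / Zn by rewrite /t /qnext ZnE.
have mtil : measurable_fun setT (tilted qi ptil lam eta).
  by apply: measurable_funM; apply: mpow.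
have mp : measurable_fun setT p.
  rewrite (_ : p = fun x => ptil x * Zc^-1); last by apply/funext => x; rewrite pE.
  by apply: measurable_funM => //; exact: measurable_cst.
have mt : measurable_fun setT t.
  rewrite (_ : t = fun x => tilted qi ptil lam eta x * Zn^-1); last by apply/funext => x; rewrite tE.
  by apply: measurable_funM => //; exact: measurable_cst.
have p0 x : 0 <= p x by rewrite pE divr_ge0 // ltW.
have til0 x : 0 <= tilted qi ptil lam eta x by rewrite /tilted mulr_ge0 // powR_ge0.
have t0 x : 0 <= t x by rewrite tE divr_ge0 // ltW.
have ip : (\int[mu]_x (p x)%:E = 1)%E.
  rewrite (eq_integral (fun x => (ptil x)%:E * (Zc^-1)%:E)%E); last by move=> x _; rewrite pE EFinM.
  rewrite ge0_integralZr //; first last.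
  - by rewrite lee_fin invr_ge0 ltW.
  - by move=> x _; rewrite lee_fin.
  - exact/measurable_EFinP.
  by rewrite -/(Zconst mu ptil) ZcE -EFinM divff // gt_eqF.
have it : (\int[mu]_x (t x)%:E = 1)%E.
  rewrite (eq_integral (fun x => (tilted qi ptil lam eta x)%:E * (Zn^-1)%:E)%E); last by move=> x _; rewrite tE EFinM.
  rewrite ge0_integralZr //; first last.
  - by rewrite lee_fin invr_ge0 ltW.
  - by move=> x _; rewrite lee_fin.
  - exact/measurable_EFinP.
  by rewrite -/(Znext mu qi ptil lam eta) ZnE -EFinM divff // gt_eqF.
have dt : is_density mu t by split.
have ent_fin : forall q, finite_entropy mu q ->
    exists E, (\int[mu]_x (q x * ln (q x))%:E = E%:E)%E /\ entropy mu q = (- E)%:E.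
  move=> q fq.
  have := integrable_fin_num measurableT fq.
  case E : (\int[mu]_x (q x * ln (q x))%:E)%E => [r||] // _.
  exists r; split => //.
  rewrite /entropy (eq_integral (fun x => (-1)%:E * (q x * ln (q x))%:E)%E); last first.
    by move=> x _; rewrite -EFinM mulN1r.
  by rewrite integralZl // E -EFinM mulN1r.
have [Eqi [EqiE Hqi]] := ent_fin qi feqi.
set K := ln Zc - c * ln Zn.
have iqi' : mu.-integrable setT (EFin \o qi) by apply: dens_int; rewrite ?iqi ?ltry.
have ip' : mu.-integrable setT (EFin \o p) by apply: dens_int; rewrite ?ip ?ltry.
have it' : mu.-integrable setT (EFin \o t) by apply: dens_int; rewrite ?it ?ltry.
have key : forall q, is_density mu q -> finite_entropy mu q ->
   lagrangian mu ptil qi eps_tr eps_ent lam eta q =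
   (c%:E * \int[mu]_x gk (q x) (t x) + (K - lam * eps_tr + eta * (- Eqi - eps_ent))%:E)%E.
  move=> q [mq q0 iq] feq.
  have [Eq [EqE Hq]] := ent_fin q feq.
  have iq' : mu.-integrable setT (EFin \o q) by apply: dens_int; rewrite ?iq ?ltry.
  rewrite /lagrangian /KL -/p KL_gk_gen // KL_gk_gen // Hqi Hq.
  apply: lag_aux => //.
  - by apply: integral_ge0 => x _; exact: gk_ge0.
  - by apply: integral_ge0 => x _; exact: gk_ge0.
  - by apply: integral_ge0 => x _; exact: gk_ge0.
  have mgp : measurable_fun setT (fun x => gk (q x) (p x)) by apply: measurable_gk.
  have mgi : measurable_fun setT (fun x => gk (q x) (qi x)) by apply: measurable_gk.
  have mgt : measurable_fun setT (fun x => gk (q x) (t x)) by apply: measurable_gk.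
  have F0 x : (0 <= gk (q x) (p x) + lam%:E * gk (q x) (qi x))%E.
    by rewrite adde_ge0 ?mule_ge0 ?lee_fin // gk_ge0.
  have mF : measurable_fun setT (fun x => gk (q x) (p x) + lam%:E * gk (q x) (qi x))%E.
    by apply: emeasurable_funD => //; exact: measurable_funeM.
  have hEq : mu.-integrable setT (EFin \o (fun x => eta * (q x * ln (q x)))).
    by apply: eq_integrable (integrableZl measurableT eta feq) => // x _; rewrite /= EFinM.
  transitivity (\int[mu]_x (gk (q x) (p x) + lam%:E * gk (q x) (qi x)
                          + (eta * (q x * ln (q x)))%:E))%E.
    rewrite (@integralD_ge0_int _ _ _ mu (fun x => gk (q x) (p x) + lam%:E * gk (q x) (qi x))%E
               (fun x => eta * (q x * ln (q x)))) //.
    rewrite ge0_integralD //; first last.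
    - exact: measurable_funeM.
    - by move=> x _; rewrite mule_ge0 ?lee_fin // gk_ge0.
    - by move=> x _; rewrite gk_ge0.
    rewrite ge0_integralZl //; last by move=> x _; rewrite gk_ge0.
    congr (_ + _)%E.
    rewrite (eq_integral (fun x => eta%:E * (q x * ln (q x))%:E)%E); last by move=> x _; rewrite EFinM.
    by rewrite integralZl // EqE -EFinM.
  pose h1 x := (eta + K) * q x + 1 * p x.
  pose h2 x := lam * qi x + (- c) * t x.
  rewrite (eq_integral (fun x => c%:E * gk (q x) (t x) + (1 * h1 x + 1 * h2 x)%:E)%E); last first.
    move=> x _; rewrite pE tE (@ptw_id _ lam eta Zc Zn) // ?ltW //.
    rewrite /h1 /h2 pE tE /K /c /tilted; congr (_ + (_)%:E)%E; ring.
  have [ih1 e1] := @int_comb _ _ _ mu _ _ (eta + K) 1 iq' ip'.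
  have [ih2 e2] := @int_comb _ _ _ mu _ _ lam (- c) iqi' it'.
  have [ih e] := @int_comb _ _ _ mu _ _ 1 1 ih1 ih2.
  rewrite integralD_ge0_int //; first last.
  - by apply: measurable_funeM.
  - by move=> x; apply: mule_ge0; [rewrite lee_fin ltW|apply: gk_ge0].
  rewrite ge0_integralZl //; last 2 first.
    by move=> x _; rewrite gk_ge0.
    by rewrite lee_fin ltW.
  congr (_ + _)%E.
  rewrite e e1 e2 iq ip iqi it !mule1 -!EFinD; congr (_%:E); rewrite /c; ring.
have Gtt : (\int[mu]_x gk (t x) (t x) = 0)%E.
  by rewrite (eq_integral (fun=> 0%E)) ?integral0 // => x _; rewrite gk_aa.
have keyt := key t dt fet.
rewrite Gtt mule0 add0e in keyt.
split => //.
- move=> q dq feq; rewrite -/t keyt key //.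
  rewrite leeDr //; apply: mule_ge0; first by rewrite lee_fin ltW.
  by apply: integral_ge0 => x _; apply: gk_ge0 => //; case: dq.
- move=> q dq feq; rewrite -/t keyt key // => H.
  have [mq q0 iq] := dq.
  have Gge : (0 <= \int[mu]_x gk (q x) (t x))%E.
    by apply: integral_ge0 => x _; apply: gk_ge0.
  have Gle : (c%:E * \int[mu]_x gk (q x) (t x) <= 0)%E.
    by move: H; rewrite -[X in (_ <= X)%E]add0e leeD2rE.
  have G0 : (\int[mu]_x gk (q x) (t x) = 0)%E.
    apply/eqP; rewrite eq_le Gge andbT.
    by rewrite -(@lee_pmul2l _ c%:E) ?lte_fin // mule0.
  have mgt : measurable_fun setT (fun x => gk (q x) (t x)) by apply: measurable_gk.
  have := (ae_eq_integral_abs mu measurableT mgt).1.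
  rewrite (eq_integral (fun x => gk (q x) (t x))); last first.
    by move=> x _; rewrite gee0_abs // gk_ge0.
  move=> /(_ G0) Hae.
  apply: filterS Hae => x /(_ I) /= /gk_eq0; apply => //.
Qed.
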